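(* Assume (H1) and (H2), and fix $\alpha_0>0$. Then for all $f_1,f_1^*\in C[0,\alpha_0]$, $$\|U^{\alpha_0}(f_1)-U^{\alpha_0}(f_1^* )\|\le \varphi(\alpha_0)\,\|f_1-f_1^*\|,\qquad \varphi(\alpha_0):=2D^*\bar F_1(\alpha_0).$$
   Context: Fix constants $a>0$, $Q_0>0$, $\lambda_0>0$, $\theta_m>0$ and put $D^*=\frac{Q_0}{4\pi\lambda_0\theta_m}$. For $\alpha_0>0$: $C[0,\alpha_0]$ is the Banach space of real continuous functions on $[0,\alpha_0]$ with norm $\|f\|=\max_{[0,\alpha_0]}|f|$. We are given maps $L^*,N^*$ assigning to each $f_1\in C[0,\alpha_0]$ positive continuous functions $L^*(f_1),N^*(f_1)$ on $(0,\alpha_0]$. Define, for $0\le\eta\le\alpha_0$: $E_1(0,\eta,f_1)=\exp\big(-\alpha_0 a\int_0^{\eta}\frac{N^*(f_1)(s)}{L^*(f_1)(s)}ds\big)$, $F_1(0,\eta,f_1)=\int_0^{\eta}\frac{E_1(0,s,f_1)}{s\,L^*(f_1)(s)}ds$, and the operator $U^{\alpha_0}(f_1)(\eta)=D^*\big[F_1(0,\alpha_0,f_1)-F_1(0,\eta,f_1)\big]$, $0\le\eta\le\alpha_0$. Hypothesis (H1) (the part used here): there are positive constants $\mu,\nu,L_{1m},L_{1M},N_{1m},N_{1M}$ with $\mu>\max(1,\nu)$ such that for all $\alpha_0>0$, all $f_1\in C[0,\alpha_0]$ and all $0<\eta\le\alpha_0$: $L_{1m}\eta^{-\mu}\le L^*(f_1)(\eta)\le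 L_{1M}\eta^{-\mu}$ and $N_{1m}\eta^{-\nu}\le N^*(f_1)(\eta)\le N_{1M}\eta^{-\nu}$. Hypothesis (H2) (the part used here): there are constants $\bar L_1,\bar N_1\ge0$ such that for all $\alpha_0>0$ and all $f_1,f_1^*\in C[0,\alpha_0]$: $\sup_{0<s\le\alpha_0}|L^*(f_1)(s)-L^*(f_1^* )(s)|\le\bar L_1\|f_1-f_1^*\|$ and $\sup_{0<s\le\alpha_0}|N^*(f_1)(s)-N^*(f_1^* )(s)|\le\bar N_1\|f_1-f_1^*\|$. For $z>0$, $\bar F_1(z)=\frac{za}{L_{1m}^2}\Big(\frac{\bar N_1 z^{2\mu+1}}{(\mu+1)(2\mu+1)}+\frac{\bar L_1N_{1M}}{L_{1m}}\frac{z^{3\mu-\nu+1}}{(2\mu-\nu+1)(3\mu-\nu+1)}\Big)+\frac{\bar L_1}{L_{1m}^2}\frac{z^{2\mu}}{2\mu}$. *)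

(* Defs.v *)
From Stdlib Require Import Reals.
From Coquelicot Require Import Coquelicot.
Open Scope R_scope.

Definition cont_on (D : R -> Prop) (f : R -> R) : Prop :=
  forall x, D x -> filterlim f (within D (locally x)) (locally (f x)).

Definition Icc (a b : R) : R -> Prop := fun x => a <= x <= b.
Definition Ioc (a b : R) : R -> Prop := fun x => a < x <= b.

Definition normC (a0 : R) (g : R -> R) : R :=
  real (Lub_Rbar (fun y => exists x, 0 <= x <= a0 /\ y = Rabs (g x))).

(* The operator maps: Ls a0 f1 is L^*(f1) for f1 in C[0,a0] (similarly Ns). *)
Definition opmap := R -> (R -> R) -> R -> R.

Definition E1 (a : R) (Ls Ns : opmap) (a0 : R) (f1 : R -> R) (eta : R) : R :=
  exp (- (a0 * a * RInt (fun s => Ns a0 f1 s / Ls a0 f1 s) 0 eta)).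

Definition F1 (a : R) (Ls Ns : opmap) (a0 : R) (f1 : R -> R) (eta : R) : R :=
  RInt (fun s => E1 a Ls Ns a0 f1 s / (s * Ls a0 f1 s)) 0 eta.

Definition Dstar (Q0 lambda0 thetam : R) : R := Q0 / (4 * PI * lambda0 * thetam).

Definition U (a Q0 lambda0 thetam : R) (Ls Ns : opmap) (a0 : R) (f1 : R -> R) (eta : R) : R :=
  Dstar Q0 lambda0 thetam * (F1 a Ls Ns a0 f1 a0 - F1 a Ls Ns a0 f1 eta).

Definition Fbar1 (a mu nu L1m N1M Lbar1 Nbar1 : R) (z : R) : R :=
  z * a / (L1m ^ 2) *
    (Nbar1 * Rpower z (2 * mu + 1) / ((mu + 1) * (2 * mu + 1))
     + Lbar1 * N1M / L1m * Rpower z (3 * mu - nu + 1)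
         / ((2 * mu - nu + 1) * (3 * mu - nu + 1)))
  + Lbar1 / (L1m ^ 2) * Rpower z (2 * mu) / (2 * mu).

(* Hypothesis (H1) (used part) together with the standing assumption that
   L^*(f1), N^*(f1) are positive continuous functions on (0,a0]. *)
Definition H1 (Ls Ns : opmap) (mu nu L1m L1M N1m N1M : R) : Prop :=
  0 < mu /\ 0 < nu /\ 0 < L1m /\ 0 < L1M /\ 0 < N1m /\ 0 < N1M /\
  Rmax 1 nu < mu /\
  forall a0 f1, 0 < a0 -> cont_on (Icc 0 a0) f1 ->
    cont_on (Ioc 0 a0) (Ls a0 f1) /\ cont_on (Ioc 0 a0) (Ns a0 f1) /\
    forall eta, 0 < eta <= a0 ->
      0 < Ls a0 f1 eta /\ 0 < Ns a0 f1 eta /\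
      L1m * Rpower eta (- mu) <= Ls a0 f1 eta <= L1M * Rpower eta (- mu) /\
      N1m * Rpower eta (- nu) <= Ns a0 f1 eta <= N1M * Rpower eta (- nu).

(* Hypothesis (H2) (used part); "sup_{0<s<=a0} |..| <= c" written pointwise. *)
Definition H2 (Ls Ns : opmap) (Lbar1 Nbar1 : R) : Prop :=
  0 <= Lbar1 /\ 0 <= Nbar1 /\
  forall a0 f1 f1s, 0 < a0 -> cont_on (Icc 0 a0) f1 -> cont_on (Icc 0 a0) f1s ->
    forall s, 0 < s <= a0 ->
      Rabs (Ls a0 f1 s - Ls a0 f1s s) <= Lbar1 * normC a0 (fun x => f1 x - f1s x) /\
      Rabs (Ns a0 f1 s - Ns a0 f1s s) <= Nbar1 * normC a0 (fun x => f1 x - f1s x).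

(* Main.v *)
Require Import Defs.
From Stdlib Require Import Reals.
From Coquelicot Require Import Coquelicot.
Open Scope R_scope.

From Stdlib Require Import Lra.
Require Import Defs.

Definition cz (a0 z s : R) := Rmax (z/2) (Rmin s a0).
Definition ext (a0 : R) (f : R -> R) (s : R) :=
  if Rle_dec s 0 then 0 else f (Rmin s a0).

Lemma Rpower_pos' x y : 0 < Rpower x y.
Proof. unfold Rpower; apply exp_pos. Qed.

Lemma rpow_small q e : 0 < q -> 0 < e ->
  exists d, 0 < d /\ forall s, 0 < s < d -> Rpower s q < e.
Proof.
  intros Hq He. exists (Rpower e (/q)). split. apply Rpower_pos'.
  intros s Hs. replace e with (Rpower (Rpower e (/q)) q).
  apply Rlt_Rpower_l; lra.
  rewrite Rpower_mult, Rinv_l by lra. apply Rpower_1; lra.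
Qed.

Lemma cz_cont a0 z x : continuity_pt (cz a0 z) x.
Proof.
  unfold continuity_pt, continue_in, limit1_in, limit_in; simpl.
  intros e He. exists e; split; auto. intros y [_ Hy].
  unfold R_dist, Rdist in *. unfold cz, Rmax, Rmin.
  repeat destruct Rle_dec; unfold Rabs in *; repeat destruct Rcase_abs; lra.
Qed.

Lemma cz_in a0 z s : 0 < z <= a0 -> Ioc 0 a0 (cz a0 z s).
Proof. intros. unfold Ioc, cz, Rmax, Rmin. repeat destruct Rle_dec; lra. Qed.

Lemma cz_id a0 z : 0 < z <= a0 -> cz a0 z z = z.
Proof. intros. unfold cz, Rmax, Rmin. repeat destruct Rle_dec; lra. Qed.

Lemma C1cont a0 f z : cont_on (Ioc 0 a0) f -> 0 < z <= a0 ->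
  continuity_pt (fun s => f (cz a0 z s)) z.
Proof.
  intros Hf Hz. apply continuity_pt_filterlim. rewrite (cz_id _ _ Hz).
  eapply filterlim_comp. 2: apply (Hf z Hz).
  intros P HP. unfold filtermap. unfold within in HP.
  pose proof (proj1 (continuity_pt_filterlim (cz a0 z) z) (cz_cont a0 z z)) as Hc.
  rewrite (cz_id _ _ Hz) in Hc. specialize (Hc _ HP). unfold filtermap in Hc.
  eapply filter_imp; [|exact Hc]. intros x Hx. apply Hx. apply cz_in; auto.
Qed.

Lemma ext_eq a0 f s : 0 < s <= a0 -> ext a0 f s = f s.
Proof. intros. unfold ext. destruct Rle_dec; [lra|]. f_equal. unfold Rmin; destruct Rle_dec; lra. Qed.

Lemma ext_cont a0 f C q : 0 < a0 -> 0 < q ->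
  (forall z, 0 < z <= a0 -> continuity_pt (fun s => f (cz a0 z s)) z) ->
  (forall s, 0 < s <= a0 -> Rabs (f s) <= C * Rpower s q) ->
  forall z, continuity_pt (ext a0 f) z.
Proof.
  intros Ha Hq Hc Hb z.
  destruct (Rlt_or_le z 0) as [Hz|Hz].
  { apply continuity_pt_locally_ext with (f := fun _ => 0) (a := - z). lra.
    intros y Hy. unfold Rdist, Rabs in Hy. destruct Rcase_abs in Hy;
    unfold ext; destruct Rle_dec; lra.
    apply continuity_pt_const. intros u v; auto. }
  destruct (Req_dec z 0) as [Hz0|Hz0].
  { subst z. unfold continuity_pt, continue_in, limit1_in, limit_in; simpl.
    intros e He. set (Cp := Rabs C + 1).
    assert (HCp : 0 < Cp) by (unfold Cp; pose proof (Rabs_pos C); lra).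
    destruct (rpow_small q (e / Cp) Hq) as [d [Hd Hd2]].
    apply Rdiv_lt_0_compat; lra.
    exists (Rmin d a0). split. apply Rmin_glb_lt; lra.
    intros x [_ Hx]. unfold R_dist, Rdist in *. unfold ext at 2.
    destruct Rle_dec; [|lra]. rewrite Rminus_0_r in *.
    unfold ext. destruct Rle_dec. rewrite ?Rminus_0_r, Rabs_R0; lra.

    assert (Hx0 : 0 < x) by lra.
    assert (Hxd : x < Rmin d a0) by (unfold Rabs in Hx; destruct Rcase_abs in Hx; lra).
    assert (x < d /\ x < a0) by (unfold Rmin in Hxd; destruct Rle_dec in Hxd; lra).
    replace (Rmin x a0) with x by (unfold Rmin; destruct Rle_dec; lra).
    eapply Rle_lt_trans. apply Hb; lra.
    assert (HP : Rpower x q < e / Cp) by (apply Hd2; lra).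
    pose proof (Rpower_pos' x q).
    apply Rle_lt_trans with (Cp * Rpower x q).
    apply Rmult_le_compat_r; [lra|]. unfold Cp; pose proof (Rle_abs C); lra.
    replace e with (Cp * (e / Cp)) by (field; lra).
    apply Rmult_lt_compat_l; lra. }
  destruct (Rle_or_lt z a0) as [Hza|Hza].
  { apply continuity_pt_locally_ext with (f := fun s => f (cz a0 z s)) (a := z/2). lra.
    intros y Hy. unfold Rdist, Rabs in Hy. destruct Rcase_abs in Hy;
    unfold ext, cz; destruct Rle_dec; try lra; f_equal;
    unfold Rmax, Rmin; repeat destruct Rle_dec; lra.
    apply Hc; lra. }
  apply continuity_pt_locally_ext with (f := fun _ => f a0) (a := z - a0). lra.
  intros y Hy. unfold Rdist, Rabs in Hy. destruct Rcase_abs in Hy;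
  unfold ext; destruct Rle_dec; try lra; f_equal; unfold Rmin; destruct Rle_dec; lra.
  apply continuity_pt_const. intros u v; auto.
Qed.

Lemma ext_int a0 f C q eta : 0 < a0 -> 0 < q ->
  (forall z, 0 < z <= a0 -> continuity_pt (fun s => f (cz a0 z s)) z) ->
  (forall s, 0 < s <= a0 -> Rabs (f s) <= C * Rpower s q) ->
  0 <= eta <= a0 -> ex_RInt f 0 eta.
Proof.
  intros Ha Hq Hc Hb He.
  apply ex_RInt_ext with (ext a0 f).
  intros x Hx. rewrite Rmin_left, Rmax_right in Hx by lra. apply ext_eq; lra.
  apply (@ex_RInt_continuous R_CompleteNormedModule). intros z _. apply continuity_pt_filterlim.
  eapply ext_cont; eauto.
Qed.

Definition Qf q s := if Rle_dec s 0 then 0 else / (q+1) * Rpower s (q+1).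
Definition Gf q s := if Rle_dec s 0 then 0 else Rpower s q.

Lemma Gf_cont q x : 0 < q -> continuity_pt (Gf q) x.
Proof.
  intros Hq. destruct (Rlt_or_le 0 x) as [Hx|Hx].
  - apply continuity_pt_locally_ext with (f := fun s => Rpower s q) (a := x). lra.
    intros y Hy. unfold Rdist, Rabs in Hy. destruct Rcase_abs in Hy;
    unfold Gf; destruct Rle_dec; lra.
    apply derivable_continuous_pt. exists (q * Rpower x (q-1)).
    apply derivable_pt_lim_power; lra.
  - destruct (Rlt_or_le x 0) as [Hx2|Hx2].
    + apply continuity_pt_locally_ext with (f := fun _ => 0) (a := - x). lra.
      intros y Hy. unfold Rdist, Rabs in Hy. destruct Rcase_abs in Hy;
      unfold Gf; destruct Rle_dec; lra.
      apply continuity_pt_const. intros u v; auto.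
    + assert (x = 0) by lra. subst x.
      unfold continuity_pt, continue_in, limit1_in, limit_in; simpl.
      intros e He. destruct (rpow_small q e Hq He) as [d [Hd Hd2]].
      exists d. split; auto. intros y [_ Hy]. unfold R_dist, Rdist in *.
      unfold Gf at 2. destruct Rle_dec; [|lra]. unfold Gf.
      rewrite Rminus_0_r in *. destruct Rle_dec. rewrite ?Rminus_0_r, Rabs_R0; lra.
      rewrite ?Rminus_0_r. pose proof (Rpower_pos' y q).
      rewrite Rabs_right by lra. apply Hd2.
      unfold Rabs in Hy; destruct Rcase_abs in Hy; lra.
Qed.

Lemma Qf_der q x : 0 < q -> 0 <= x -> derivable_pt_lim (Qf q) x (Gf q x).
Proof.
  intros Hq Hx. destruct (Rlt_or_le 0 x) as [Hx1|Hx1].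
  - apply derivable_pt_lim_locally_ext with
      (f := mult_real_fct (/(q+1)) (fun s => Rpower s (q+1))) (a := 0) (b := x+1). lra.
    intros z Hz. unfold mult_real_fct, Qf. destruct Rle_dec; lra.
    replace (Gf q x) with (/(q+1) * ((q+1) * Rpower x (q+1-1))).
    apply derivable_pt_lim_scal. apply derivable_pt_lim_power; lra.
    unfold Gf. destruct Rle_dec; [lra|]. replace (q+1-1) with q by ring. field. lra.
  - assert (x = 0) by lra. subst x.
    intros e He. destruct (rpow_small q e Hq He) as [d [Hd Hd2]].
    exists (mkposreal d Hd). simpl. intros h Hh Hhd.
    unfold Gf, Qf. destruct (Rle_dec 0 0); [|lra]. rewrite Rplus_0_l, Rminus_0_r.
    destruct Rle_dec. replace ((0 - 0) / h) with 0 by (field; lra). rewrite Rabs_R0; lra.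
    rewrite Rminus_0_r. rewrite Rpower_plus, Rpower_1 by lra.
    replace (/ (q + 1) * (Rpower h q * h) / h) with (/ (q+1) * Rpower h q) by (field; lra).
    pose proof (Rpower_pos' h q).
    assert (0 < /(q+1) < 1). split. apply Rinv_0_lt_compat; lra.
    rewrite <- Rinv_1. apply Rinv_lt_contravar; lra.
    rewrite Rabs_right. 2: { apply Rle_ge. apply Rmult_le_pos; lra. }
    assert (Rpower h q < e). apply Hd2. unfold Rabs in Hhd; destruct Rcase_abs in Hhd; lra.
    nra.
Qed.

Lemma pow_int q eta : 0 < q -> 0 < eta ->
  is_RInt (fun s => Rpower s q) 0 eta (Rpower eta (q+1) / (q+1)).
Proof.
  intros Hq He.
  apply is_RInt_ext with (Gf q).
  intros x Hx. rewrite Rmin_left, Rmax_right in Hx by lra. unfold Gf; destruct Rle_dec; lra.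
  replace (Rpower eta (q + 1) / (q + 1)) with (minus (Qf q eta) (Qf q 0)).
  apply (@is_RInt_derive R_CompleteNormedModule).
  intros x Hx. rewrite Rmin_left, Rmax_right in Hx by lra.
  apply is_derive_Reals. apply Qf_der; lra.
  intros x Hx. apply continuity_pt_filterlim. apply Gf_cont; lra.
  unfold Qf, minus, plus, opp; simpl. destruct (Rle_dec 0 0); [|lra].
  destruct Rle_dec; [lra|]. field. lra.
Qed.

Lemma exp_diff x y : 0 <= x -> 0 <= y -> Rabs (exp (-x) - exp (-y)) <= Rabs (x - y).
Proof.
  assert (H : forall x y, 0 <= x <= y -> exp (-x) - exp (-y) <= y - x /\ 0 <= exp (-x) - exp (-y)).
  { intros u v Huv. replace (exp (-v)) with (exp (-u) * exp (-(v-u))).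
    2: { rewrite <- exp_plus. f_equal. ring. }
    assert (exp (-u) <= 1). { destruct (Req_dec u 0). subst. rewrite Ropp_0, exp_0; lra.
      rewrite <- exp_0. left. apply exp_increasing. lra. }
    pose proof (exp_pos (-u)). pose proof (exp_ineq1_le (-(v-u))).
    assert (exp (-(v-u)) <= 1). { destruct (Req_dec u v). subst. replace (-(v-v)) with 0 by ring. rewrite exp_0; lra.
      rewrite <- exp_0. left. apply exp_increasing. lra. }
    split; nra. }
  intros Hx Hy. destruct (Rle_or_lt x y).
  - destruct (H x y) as [H1 H2]; [lra|]. rewrite Rabs_right by lra.
    rewrite Rabs_left1 by lra. lra.
  - destruct (H y x) as [H1 H2]; [lra|]. rewrite Rabs_left1 by lra.
    rewrite Rabs_right by lra. lra.
Qed.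

Lemma int_bound f f' h eta : 0 <= eta ->
  ex_RInt f 0 eta -> ex_RInt f' 0 eta -> ex_RInt h 0 eta ->
  (forall x, 0 < x < eta -> Rabs (f x - f' x) <= h x) ->
  Rabs (RInt f 0 eta - RInt f' 0 eta) <= RInt h 0 eta.
Proof.
  intros He Hf Hf' Hh Hb.
  assert (E : RInt f 0 eta - RInt f' 0 eta = RInt (fun x => f x - f' x) 0 eta).
  { symmetry. exact (RInt_minus f f' 0 eta Hf Hf'). }
  rewrite E. eapply Rle_trans. apply abs_RInt_le; auto.
  apply (ex_RInt_minus f f' 0 eta Hf Hf').
  apply RInt_le; auto.
  apply ex_RInt_norm. apply (ex_RInt_minus f f' 0 eta Hf Hf').
Qed.

Lemma int_ge0 f eta : 0 <= eta -> ex_RInt f 0 eta -> (forall x, 0 < x < eta -> 0 <= f x) ->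
  0 <= RInt f 0 eta.
Proof.
  intros He Hf Hp. replace 0 with (RInt (fun _ => 0) 0 eta) at 1.
  apply RInt_le; auto. apply ex_RInt_const.
  rewrite RInt_const. unfold scal; simpl; unfold mult; simpl. ring.
Qed.

Lemma normC_le a0 g B : 0 <= a0 -> (forall x, 0 <= x <= a0 -> Rabs (g x) <= B) -> normC a0 g <= B.
Proof.
  intros Ha Hb. unfold normC.
  destruct (Lub_Rbar_correct (fun y => exists x, 0 <= x <= a0 /\ y = Rabs (g x))) as [Hub Hl].
  assert (H1 : Rbar_le (Lub_Rbar (fun y => exists x, 0 <= x <= a0 /\ y = Rabs (g x))) B).
  { apply Hl. intros y [x [Hx ->]]. simpl. apply Hb; auto. }
  assert (H2 : Rbar_le (Rabs (g 0)) (Lub_Rbar (fun y => exists x, 0 <= x <= a0 /\ y = Rabs (g x)))).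
  { apply Hub. exists 0. split; [lra|auto]. }
  destruct (Lub_Rbar _); simpl in *; try tauto.
Qed.

Lemma cpt_mult f g x : continuity_pt f x -> continuity_pt g x -> continuity_pt (fun s => f s * g s) x.
Proof. exact (continuity_pt_mult f g x). Qed.
Lemma cpt_div f g x : continuity_pt f x -> continuity_pt g x -> g x <> 0 -> continuity_pt (fun s => f s / g s) x.
Proof. exact (continuity_pt_div f g x). Qed.
Lemma cpt_const c x : continuity_pt (fun _ => c) x.
Proof. apply continuity_pt_const. intros u v; auto. Qed.
Lemma cpt_exp f x : continuity_pt f x -> continuity_pt (fun s => exp (f s)) x.
Proof. intros H. exact (continuity_pt_comp f exp x H (derivable_continuous_pt _ _ (derivable_pt_exp _))). Qed.
Lemma cpt_opp f x : continuity_pt f x -> continuity_pt (fun s => - f s) x.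
Proof. exact (continuity_pt_opp f x). Qed.
Lemma cpt_comp f g x : continuity_pt f x -> continuity_pt g (f x) -> continuity_pt (fun s => g (f s)) x.
Proof. exact (continuity_pt_comp f g x). Qed.

Lemma inv_bound c p L : 0 < c -> 0 < p -> c * / p <= L -> 0 < / L <= p / c.
Proof.
  intros Hc Hp H. assert (0 < c * / p) by (apply Rmult_lt_0_compat; auto; apply Rinv_0_lt_compat; auto).
  split. apply Rinv_0_lt_compat; lra.
  replace (p / c) with (/ (c * / p)) by (field; lra). apply Rinv_le_contravar; auto.
Qed.

Lemma rp_sub s x y : Rpower s (x - y) = Rpower s x / Rpower s y.
Proof. unfold Rminus, Rdiv. rewrite Rpower_plus, Rpower_Ropp. reflexivity. Qed.

Lemma key_r N N' L L' pm pn L1m N1M Lb Nb d :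
  0 < L1m -> 0 < pm -> 0 < pn ->
  0 < / L <= pm / L1m -> 0 < / L' <= pm / L1m ->
  0 < N' -> N' <= N1M * / pn ->
  Rabs (L - L') <= Lb * d -> Rabs (N - N') <= Nb * d ->
  Rabs (N / L - N' / L') <= Nb * d * (pm / L1m) + N1M * / pn * (Lb * d) * (pm / L1m) * (pm / L1m).
Proof.
  intros HL1 Hpm Hpn [Hu1 Hu2] [Hv1 Hv2] HN1 HN2 HdL HdN.
  assert (HL : L <> 0). { intro E; rewrite E, Rinv_0 in Hu1; lra. }
  assert (HL' : L' <> 0). { intro E; rewrite E, Rinv_0 in Hv1; lra. }
  replace (N / L - N' / L') with ((N - N') * / L + N' * (L - L') * (- (/L * / L'))) by (field; auto).
  eapply Rle_trans. apply Rabs_triang. rewrite !Rabs_mult, Rabs_Ropp.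
  rewrite (Rabs_right (/L)) by lra. rewrite (Rabs_right N') by lra.
  rewrite (Rabs_right (/L * /L')) by (apply Rle_ge, Rmult_le_pos; lra).
  pose proof (Rabs_pos (N - N')). pose proof (Rabs_pos (L - L')).
  apply Rplus_le_compat. apply Rmult_le_compat; lra.
  replace (N1M * / pn * (Lb * d) * (pm / L1m) * (pm / L1m)) with
    (N1M * / pn * (Lb * d) * ((pm / L1m) * (pm / L1m))) by ring.
  assert (0 < / pn) by (apply Rinv_0_lt_compat; lra).
  apply Rmult_le_compat. apply Rmult_le_pos; lra.
  apply Rmult_le_pos; lra. apply Rmult_le_compat; lra.
  apply Rmult_le_compat; lra.
Qed.

Lemma key_g E E' s L L' pm L1m Lb d B :
  0 < L1m -> 0 < pm -> 0 < s ->
  0 < / L <= pm / L1m -> 0 < / L' <= pm / L1m ->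
  0 < E' <= 1 ->
  Rabs (L - L') <= Lb * d -> Rabs (E - E') <= B ->
  Rabs (E / (s * L) - E' / (s * L')) <= B * (pm / L1m) / s + Lb * d * (pm / L1m) * (pm / L1m) / s.
Proof.
  intros HL1 Hpm Hs [Hu1 Hu2] [Hv1 Hv2] [HE1 HE2] HdL HdE.
  assert (HL : L <> 0). { intro E0; rewrite E0, Rinv_0 in Hu1; lra. }
  assert (HL' : L' <> 0). { intro E0; rewrite E0, Rinv_0 in Hv1; lra. }
  replace (E / (s * L) - E' / (s * L')) with
    ((E - E') * / L * / s + E' * (L - L') * (- (/L * / L')) * / s) by (field; repeat split; auto; lra).
  eapply Rle_trans. apply Rabs_triang. rewrite !Rabs_mult, Rabs_Ropp.
  rewrite (Rabs_right (/L)) by lra. rewrite (Rabs_right E') by lra.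
  rewrite (Rabs_right (/s)) by (apply Rle_ge; left; apply Rinv_0_lt_compat; lra).
  rewrite (Rabs_right (/L * /L')) by (apply Rle_ge, Rmult_le_pos; lra).
  pose proof (Rabs_pos (E - E')). pose proof (Rabs_pos (L - L')).
  assert (0 < / s) by (apply Rinv_0_lt_compat; lra).
  assert (HA : Rabs (E - E') * / L * / s <= B * (pm / L1m) / s).
  { unfold Rdiv at 2. apply Rmult_le_compat_r; [lra|]. apply Rmult_le_compat; lra. }
  assert (H2 : E' * Rabs (L - L') <= Lb * d) by nra.
  assert (H3 : / L * / L' <= (pm / L1m) * (pm / L1m)) by (apply Rmult_le_compat; lra).
  assert (HX : E' * Rabs (L - L') * (/ L * / L') <= Lb * d * (pm / L1m * (pm / L1m))).
  { apply Rmult_le_compat; try lra. apply Rmult_le_pos; lra. apply Rmult_le_pos; lra. }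
  assert (HB : E' * Rabs (L - L') * (/ L * / L') * / s <= Lb * d * (pm / L1m) * (pm / L1m) / s).
  { replace (Lb * d * (pm / L1m) * (pm / L1m) / s) with (Lb * d * (pm / L1m * (pm / L1m)) * / s) by (field; lra).
    apply Rmult_le_compat_r; lra. }
  lra.
Qed.

Lemma int2 c1 q1 c2 q2 eta : 0 < q1 -> 0 < q2 -> 0 < eta ->
  is_RInt (fun s => c1 * Rpower s q1 + c2 * Rpower s q2) 0 eta
    (c1 * (Rpower eta (q1+1) / (q1+1)) + c2 * (Rpower eta (q2+1) / (q2+1))).
Proof.
  intros. apply (is_RInt_plus (V := R_NormedModule)); apply (is_RInt_scal (V := R_NormedModule)); apply pow_int; auto.
Qed.

Lemma int3 c1 q1 c2 q2 c3 q3 eta : 0 < q1 -> 0 < q2 -> 0 < q3 -> 0 < eta ->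
  is_RInt (fun s => c1 * Rpower s q1 + c2 * Rpower s q2 + c3 * Rpower s q3) 0 eta
    (c1 * (Rpower eta (q1+1) / (q1+1)) + c2 * (Rpower eta (q2+1) / (q2+1)) + c3 * (Rpower eta (q3+1) / (q3+1))).
Proof.
  intros. apply (is_RInt_plus (V := R_NormedModule)). apply int2; auto.
  apply (is_RInt_scal (V := R_NormedModule)); apply pow_int; auto.
Qed.

Section Single.
Variables (a mu nu L1m N1M : R) (Ls Ns : opmap) (a0 : R) (f1 : R -> R).
Hypotheses (Ha0 : 0 < a0) (Ha : 0 < a) (Hmu1 : 1 < mu) (Hmunu : nu < mu) (Hnu : 0 < nu)
  (HL1m : 0 < L1m) (HN1M : 0 < N1M)
  (HLc : cont_on (Ioc 0 a0) (Ls a0 f1)) (HNc : cont_on (Ioc 0 a0) (Ns a0 f1))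
  (Hb : forall s, 0 < s <= a0 -> 0 < Ls a0 f1 s /\ 0 < Ns a0 f1 s /\
        L1m * Rpower s (-mu) <= Ls a0 f1 s /\ Ns a0 f1 s <= N1M * Rpower s (-nu)).

Local Notation L := (Ls a0 f1).
Local Notation N := (Ns a0 f1).

Lemma invL s : 0 < s <= a0 -> 0 < / L s <= Rpower s mu / L1m.
Proof.
  intros Hs. destruct (Hb s Hs) as [_ [_ [H _]]]. rewrite Rpower_Ropp in H.
  apply inv_bound; auto. apply Rpower_pos'.
Qed.

Lemma r_bound s : 0 < s <= a0 -> Rabs (N s / L s) <= N1M / L1m * Rpower s (mu - nu).
Proof.
  intros Hs. destruct (Hb s Hs) as [HL [HN [_ HN2]]]. destruct (invL s Hs) as [Hu1 Hu2].
  rewrite Rpower_Ropp in HN2. rewrite rp_sub.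
  pose proof (Rpower_pos' s mu). pose proof (Rpower_pos' s nu).
  assert (0 < / Rpower s nu) by (apply Rinv_0_lt_compat; lra).
  rewrite Rabs_right. 2: { apply Rle_ge. unfold Rdiv. apply Rmult_le_pos; lra. }
  unfold Rdiv. replace (N1M * / L1m * (Rpower s mu * / Rpower s nu)) with
    ((N1M * / Rpower s nu) * (Rpower s mu / L1m)) by (field; lra).
  apply Rmult_le_compat; lra.
Qed.

Lemma r_cont z : 0 < z <= a0 -> continuity_pt (fun s => N (cz a0 z s) / L (cz a0 z s)) z.
Proof.
  intros Hz. apply cpt_div.
  apply (C1cont a0 _ z HNc Hz). apply (C1cont a0 _ z HLc Hz).
  rewrite cz_id by auto. destruct (Hb z Hz) as [H _]. lra.
Qed.

Lemma r_int eta : 0 <= eta <= a0 -> ex_RInt (fun s => N s / L s) 0 eta.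
Proof.
  intros He. apply (ext_int a0 _ (N1M / L1m) (mu - nu) eta Ha0); [lra | exact r_cont | exact r_bound | exact He].
Qed.

Lemma r_pos eta : 0 <= eta <= a0 -> 0 <= RInt (fun s => N s / L s) 0 eta.
Proof.
  intros He. apply int_ge0. lra. apply r_int; auto.
  intros x Hx. destruct (Hb x) as [HL [HN _]]. lra. left. apply Rdiv_lt_0_compat; auto.
Qed.

Local Notation P := (RInt (ext a0 (fun s => N s / L s)) 0).

Lemma ext_r_cont x : continuity_pt (ext a0 (fun s => N s / L s)) x.
Proof.
  apply (ext_cont a0 _ (N1M / L1m) (mu - nu) Ha0); [lra | exact r_cont | exact r_bound].
Qed.

Lemma P_cont x : continuity_pt P x.
Proof.
  apply continuity_pt_filterlim. apply (ex_derive_continuous (K := R_AbsRing) (V := R_NormedModule)).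
  exists (ext a0 (fun s => N s / L s) x).
  apply (is_derive_RInt (V := R_NormedModule) _ P 0 x).
  apply filter_forall. intros y. apply (RInt_correct (V := R_CompleteNormedModule)).
  apply (@ex_RInt_continuous R_CompleteNormedModule). intros z _.
  apply continuity_pt_filterlim. apply ext_r_cont.
  apply continuity_pt_filterlim. apply ext_r_cont.
Qed.

Lemma E_eq y : 0 <= y <= a0 -> E1 a Ls Ns a0 f1 y = exp (- (a0 * a * P y)).
Proof.
  intros Hy. unfold E1. do 3 f_equal. apply RInt_ext.
  intros x Hx. rewrite Rmin_left, Rmax_right in Hx by lra. rewrite ext_eq by lra. reflexivity.
Qed.

Lemma E_le1 y : 0 <= y <= a0 -> 0 < E1 a Ls Ns a0 f1 y <= 1.
Proof.
  intros Hy. unfold E1. split. apply exp_pos.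
  pose proof (r_pos y Hy).
  assert (0 <= a0 * a * RInt (fun s => Ns a0 f1 s / Ls a0 f1 s) 0 y).
  { apply Rmult_le_pos; auto. apply Rmult_le_pos; lra. }
  destruct H0 as [H0|H0]. left. rewrite <- exp_0. apply exp_increasing. lra.
  rewrite <- H0, Ropp_0, exp_0. lra.
Qed.

Lemma g_cont z : 0 < z <= a0 ->
  continuity_pt (fun s => E1 a Ls Ns a0 f1 (cz a0 z s) / (cz a0 z s * L (cz a0 z s))) z.
Proof.
  intros Hz.
  apply continuity_pt_ext with (f := fun s => exp (- (a0 * a * P (cz a0 z s))) / (cz a0 z s * L (cz a0 z s))).
  { intros s. rewrite E_eq. reflexivity. pose proof (cz_in a0 z s Hz). unfold Ioc in H. lra. }
  apply cpt_div.
  - apply cpt_exp. apply cpt_opp. apply cpt_mult. apply cpt_const.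
    apply cpt_comp. apply cz_cont. apply P_cont.
  - apply cpt_mult. apply cz_cont. apply (C1cont a0 _ z HLc Hz).
  - rewrite cz_id by auto. destruct (Hb z Hz) as [H _].
    apply Rgt_not_eq. apply Rmult_lt_0_compat; lra.
Qed.

Lemma g_bound s : 0 < s <= a0 ->
  Rabs (E1 a Ls Ns a0 f1 s / (s * L s)) <= / L1m * Rpower s (mu - 1).
Proof.
  intros Hs. destruct (invL s Hs) as [Hu1 Hu2]. destruct (E_le1 s) as [HE1 HE2]. lra.
  rewrite rp_sub, Rpower_1 by lra. pose proof (Rpower_pos' s mu).
  assert (HL : L s <> 0). { intro E0; rewrite E0, Rinv_0 in Hu1; lra. }
  replace (E1 a Ls Ns a0 f1 s / (s * L s)) with (E1 a Ls Ns a0 f1 s * / L s * / s) by (field; lra).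
  assert (0 < / s) by (apply Rinv_0_lt_compat; lra).
  rewrite Rabs_right. 2: { apply Rle_ge. apply Rmult_le_pos; [apply Rmult_le_pos|]; lra. }
  replace (/ L1m * (Rpower s mu / s)) with (1 * (Rpower s mu / L1m) * / s) by (field; lra).
  apply Rmult_le_compat_r; [lra|]. apply Rmult_le_compat; lra.
Qed.

Lemma g_int eta : 0 <= eta <= a0 ->
  ex_RInt (fun s => E1 a Ls Ns a0 f1 s / (s * L s)) 0 eta.
Proof.
  intros He. apply (ext_int a0 _ (/ L1m) (mu - 1) eta Ha0); [lra | exact g_cont | exact g_bound | exact He].
Qed.

End Single.

Section Pair.
Variables (a mu nu L1m N1M Lb Nb d : R) (Ls Ns : opmap) (a0 : R) (f1 f2 : R -> R).
Hypotheses (Ha0 : 0 < a0) (Ha : 0 < a) (Hmu1 : 1 < mu) (Hmunu : nu < mu) (Hnu : 0 < nu)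
  (HL1m : 0 < L1m) (HN1M : 0 < N1M)
  (HLc1 : cont_on (Ioc 0 a0) (Ls a0 f1)) (HNc1 : cont_on (Ioc 0 a0) (Ns a0 f1))
  (Hb1 : forall s, 0 < s <= a0 -> 0 < Ls a0 f1 s /\ 0 < Ns a0 f1 s /\
        L1m * Rpower s (-mu) <= Ls a0 f1 s /\ Ns a0 f1 s <= N1M * Rpower s (-nu))
  (HLc2 : cont_on (Ioc 0 a0) (Ls a0 f2)) (HNc2 : cont_on (Ioc 0 a0) (Ns a0 f2))
  (Hb2 : forall s, 0 < s <= a0 -> 0 < Ls a0 f2 s /\ 0 < Ns a0 f2 s /\
        L1m * Rpower s (-mu) <= Ls a0 f2 s /\ Ns a0 f2 s <= N1M * Rpower s (-nu))
  (Hd : forall s, 0 < s <= a0 -> Rabs (Ls a0 f1 s - Ls a0 f2 s) <= Lb * d /\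
        Rabs (Ns a0 f1 s - Ns a0 f2 s) <= Nb * d).

Let c1 := d * Nb / L1m.
Let c2 := d * Lb * N1M / (L1m * L1m).

Ltac single := try eassumption; try lra.

Lemma dI_bound eta : 0 < eta <= a0 ->
  Rabs (RInt (fun s => Ns a0 f1 s / Ls a0 f1 s) 0 eta - RInt (fun s => Ns a0 f2 s / Ls a0 f2 s) 0 eta)
  <= c1 * (Rpower eta (mu+1) / (mu+1)) + c2 * (Rpower eta (2*mu-nu+1) / (2*mu-nu+1)).
Proof.
  intros He.
  assert (HI := int2 c1 mu c2 (2*mu-nu) eta ltac:(lra) ltac:(lra) ltac:(lra)).
  rewrite <- (is_RInt_unique _ _ _ _ HI).
  apply int_bound. lra.
  apply (r_int mu nu L1m N1M Ls Ns a0 f1 Ha0 Hmunu HL1m HLc1 HNc1 Hb1); lra.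
  apply (r_int mu nu L1m N1M Ls Ns a0 f2 Ha0 Hmunu HL1m HLc2 HNc2 Hb2); lra.
  eexists; exact HI.
  intros s Hs. assert (Hs' : 0 < s <= a0) by lra.
  destruct (Hd s Hs') as [HdL HdN].
  destruct (Hb2 s Hs') as [_ [HN2 [_ HN2b]]]. rewrite Rpower_Ropp in HN2b.
  pose proof (Rpower_pos' s mu). pose proof (Rpower_pos' s nu).
  eapply Rle_trans. apply key_r with (pm := Rpower s mu) (pn := Rpower s nu) (L1m := L1m) (N1M := N1M) (Lb := Lb) (Nb := Nb) (d := d); try eassumption.
  apply (invL mu nu L1m N1M Ls Ns a0 f1 HL1m Hb1); lra.
  apply (invL mu nu L1m N1M Ls Ns a0 f2 HL1m Hb2); lra.
  right. replace (2 * mu - nu) with (mu + mu - nu) by ring. rewrite rp_sub, Rpower_plus.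
  unfold c1, c2. field. split; lra.
Qed.

Lemma dE_bound s : 0 < s <= a0 ->
  Rabs (E1 a Ls Ns a0 f1 s - E1 a Ls Ns a0 f2 s)
  <= a0 * a * (c1 * (Rpower s (mu+1) / (mu+1)) + c2 * (Rpower s (2*mu-nu+1) / (2*mu-nu+1))).
Proof.
  intros Hs. unfold E1. eapply Rle_trans. apply exp_diff.
  apply Rmult_le_pos. apply Rmult_le_pos; lra. apply (r_pos mu nu L1m N1M Ls Ns a0 f1 Ha0 Hmunu HL1m HLc1 HNc1 Hb1); lra.
  apply Rmult_le_pos. apply Rmult_le_pos; lra. apply (r_pos mu nu L1m N1M Ls Ns a0 f2 Ha0 Hmunu HL1m HLc2 HNc2 Hb2); lra.
  rewrite <- Rmult_minus_distr_l, Rabs_mult, Rabs_right.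
  apply Rmult_le_compat_l. apply Rmult_le_pos; lra. apply dI_bound; auto.
  apply Rle_ge, Rmult_le_pos; lra.
Qed.

Let k1 := a0 * a * c1 / L1m.
Let k2 := a0 * a * c2 / L1m.
Let k3 := d * Lb / (L1m * L1m).

Lemma dF_bound eta : 0 < eta <= a0 ->
  Rabs (F1 a Ls Ns a0 f1 eta - F1 a Ls Ns a0 f2 eta)
  <= k1 / (mu+1) * (Rpower eta (2*mu+1) / (2*mu+1))
   + k2 / (2*mu-nu+1) * (Rpower eta (3*mu-nu+1) / (3*mu-nu+1))
   + k3 * (Rpower eta (2*mu-1+1) / (2*mu-1+1)).
Proof.
  intros He.
  assert (HI := int3 (k1/(mu+1)) (2*mu) (k2/(2*mu-nu+1)) (3*mu-nu) k3 (2*mu-1) eta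
     ltac:(lra) ltac:(lra) ltac:(lra) ltac:(lra)).
  rewrite <- (is_RInt_unique _ _ _ _ HI).
  unfold F1. apply int_bound. lra.
  apply (g_int a mu nu L1m N1M Ls Ns a0 f1 Ha0 Ha Hmu1 Hmunu HL1m HLc1 HNc1 Hb1); lra.
  apply (g_int a mu nu L1m N1M Ls Ns a0 f2 Ha0 Ha Hmu1 Hmunu HL1m HLc2 HNc2 Hb2); lra.
  eexists; exact HI.
  intros s Hs. assert (Hs' : 0 < s <= a0) by lra.
  destruct (Hd s Hs') as [HdL HdN].
  pose proof (Rpower_pos' s mu). pose proof (Rpower_pos' s nu).
  eapply Rle_trans. apply key_g with (pm := Rpower s mu) (L1m := L1m) (Lb := Lb) (d := d); try eassumption; try lra.
  apply (invL mu nu L1m N1M Ls Ns a0 f1 HL1m Hb1); lra.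
  apply (invL mu nu L1m N1M Ls Ns a0 f2 HL1m Hb2); lra.
  apply (E_le1 a mu nu L1m N1M Ls Ns a0 f2 Ha0 Ha Hmunu HL1m HLc2 HNc2 Hb2); lra.
  apply dE_bound; auto.
  right.
  replace (2 * mu - nu + 1) with (mu + mu - nu + 1) by ring.
  replace (3 * mu - nu) with (mu + mu + mu - nu) by ring.
  replace (2 * mu - 1) with (mu + mu - 1) by ring.
  replace (2 * mu) with (mu + mu) by ring.
  rewrite !rp_sub, !Rpower_plus, !Rpower_1 by lra.
  rewrite !rp_sub, !Rpower_plus by lra.
  unfold k1, k2, k3, c1, c2. field. repeat split; lra.
Qed.

End Pair.

Theorem lemma3 (a Q0 lambda0 thetam : R) (Ls Ns : opmap)
  (mu nu L1m L1M N1m N1M Lbar1 Nbar1 : R) (a0 : R) :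
  0 < a -> 0 < Q0 -> 0 < lambda0 -> 0 < thetam ->
  H1 Ls Ns mu nu L1m L1M N1m N1M ->
  H2 Ls Ns Lbar1 Nbar1 ->
  0 < a0 ->
  forall f1 f1s : R -> R,
    cont_on (Icc 0 a0) f1 -> cont_on (Icc 0 a0) f1s ->
    normC a0 (fun eta => U a Q0 lambda0 thetam Ls Ns a0 f1 eta
                         - U a Q0 lambda0 thetam Ls Ns a0 f1s eta)
    <= 2 * Dstar Q0 lambda0 thetam * Fbar1 a mu nu L1m N1M Lbar1 Nbar1 a0
       * normC a0 (fun x => f1 x - f1s x).
Proof.
  intros Ha HQ Hl Ht HH1 HH2 Ha0 f1 f1s Hf1 Hf1s.
  destruct HH1 as [Hmu [Hnu [HL1m [HL1M [HN1m [HN1M [Hmax Hh1]]]]]]].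
  destruct HH2 as [HLb [HNb Hh2]].
  assert (Hmu1 : 1 < mu) by (pose proof (Rmax_l 1 nu); lra).
  assert (Hmunu : nu < mu) by (pose proof (Rmax_r 1 nu); lra).
  destruct (Hh1 a0 f1 Ha0 Hf1) as [HLc1 [HNc1 Hb1]].
  destruct (Hh1 a0 f1s Ha0 Hf1s) as [HLc2 [HNc2 Hb2]].
  assert (Hb1' : forall s, 0 < s <= a0 -> 0 < Ls a0 f1 s /\ 0 < Ns a0 f1 s /\
        L1m * Rpower s (-mu) <= Ls a0 f1 s /\ Ns a0 f1 s <= N1M * Rpower s (-nu)).
  { intros s Hs. destruct (Hb1 s Hs) as [A [B [[C _] [_ E]]]]. auto. }
  assert (Hb2' : forall s, 0 < s <= a0 -> 0 < Ls a0 f1s s /\ 0 < Ns a0 f1s s /\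
        L1m * Rpower s (-mu) <= Ls a0 f1s s /\ Ns a0 f1s s <= N1M * Rpower s (-nu)).
  { intros s Hs. destruct (Hb2 s Hs) as [A [B [[C _] [_ E]]]]. auto. }
  set (d := normC a0 (fun x => f1 x - f1s x)).
  assert (Hd : forall s, 0 < s <= a0 -> Rabs (Ls a0 f1 s - Ls a0 f1s s) <= Lbar1 * d /\
        Rabs (Ns a0 f1 s - Ns a0 f1s s) <= Nbar1 * d).
  { intros s Hs. apply Hh2; auto. }
  assert (HdL : 0 <= d * Lbar1).
  { destruct (Hd a0) as [H _]; [lra|]. pose proof (Rabs_pos (Ls a0 f1 a0 - Ls a0 f1s a0)). lra. }
  assert (HdN : 0 <= d * Nbar1).
  { destruct (Hd a0) as [_ H]; [lra|]. pose proof (Rabs_pos (Ns a0 f1 a0 - Ns a0 f1s a0)). lra. }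
  set (Fb := Fbar1 a mu nu L1m N1M Lbar1 Nbar1 a0).
  assert (HFp : forall eta, 0 < eta <= a0 ->
     Rabs (F1 a Ls Ns a0 f1 eta - F1 a Ls Ns a0 f1s eta) <= Fb * d).
  { intros eta He.
    eapply Rle_trans.
    apply (dF_bound a mu nu L1m N1M Lbar1 Nbar1 d Ls Ns a0 f1 f1s Ha0 Ha Hmu1 Hmunu HL1m
             HLc1 HNc1 Hb1' HLc2 HNc2 Hb2' Hd eta He).
    replace (2 * mu - 1 + 1) with (2 * mu) by ring.
    assert (Hk1 : 0 <= a0 * a * (d * Nbar1 / L1m) / L1m / (mu + 1)).
    { replace (a0 * a * (d * Nbar1 / L1m) / L1m / (mu + 1)) with
        ((d * Nbar1) * (a0 * a / (L1m * L1m * (mu + 1)))) by (field; lra).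
      apply Rmult_le_pos; auto. left. apply Rdiv_lt_0_compat. nra.
      apply Rmult_lt_0_compat; nra. }
    assert (Hk2 : 0 <= a0 * a * (d * Lbar1 * N1M / (L1m * L1m)) / L1m / (2 * mu - nu + 1)).
    { replace (a0 * a * (d * Lbar1 * N1M / (L1m * L1m)) / L1m / (2 * mu - nu + 1)) with
        ((d * Lbar1) * (a0 * a * N1M / (L1m * L1m * L1m * (2 * mu - nu + 1)))) by (field; lra).
      apply Rmult_le_pos; auto. left. apply Rdiv_lt_0_compat. apply Rmult_lt_0_compat; nra.
      apply Rmult_lt_0_compat; [|lra]. apply Rmult_lt_0_compat; nra. }
    assert (Hk3 : 0 <= d * Lbar1 / (L1m * L1m)).
    { unfold Rdiv. apply Rmult_le_pos; auto. left. apply Rinv_0_lt_compat. nra. }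
    assert (Hm : forall p c, 0 < p -> 0 <= c -> c * (Rpower eta p / p) <= c * (Rpower a0 p / p)).
    { intros p c Hp Hc. apply Rmult_le_compat_l; auto. unfold Rdiv. apply Rmult_le_compat_r.
      left; apply Rinv_0_lt_compat; auto. apply Rle_Rpower_l; lra. }
    eapply Rle_trans.
    apply Rplus_le_compat. apply Rplus_le_compat.
    apply Hm; [lra|exact Hk1]. apply Hm; [lra|exact Hk2]. apply Hm; [lra|exact Hk3].
    right. unfold Fb, Fbar1. field. repeat split; lra. }
  assert (HF : forall eta, 0 <= eta <= a0 ->
     Rabs (F1 a Ls Ns a0 f1 eta - F1 a Ls Ns a0 f1s eta) <= Fb * d).
  { intros eta He. destruct (Req_dec eta 0) as [E|E].
    - subst eta. unfold F1. rewrite !RInt_point. unfold zero; simpl.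
      rewrite Rminus_0_r, Rabs_R0. eapply Rle_trans. apply Rabs_pos. apply (HFp a0). lra.
    - apply HFp. lra. }
  assert (HD : 0 < Dstar Q0 lambda0 thetam).
  { unfold Dstar. apply Rdiv_lt_0_compat; auto. pose proof PI_RGT_0.
    apply Rmult_lt_0_compat; [|lra]. apply Rmult_lt_0_compat; [|lra]. apply Rmult_lt_0_compat; lra. }
  apply normC_le. lra. intros eta He. unfold U.
  set (D := Dstar Q0 lambda0 thetam).
  set (x := F1 a Ls Ns a0 f1 a0 - F1 a Ls Ns a0 f1s a0).
  set (y := F1 a Ls Ns a0 f1 eta - F1 a Ls Ns a0 f1s eta).
  replace (D * (F1 a Ls Ns a0 f1 a0 - F1 a Ls Ns a0 f1 eta) -
     D * (F1 a Ls Ns a0 f1s a0 - F1 a Ls Ns a0 f1s eta)) with (D * (x - y)) by (unfold x, y; ring).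
  rewrite Rabs_mult, (Rabs_right D) by (unfold D; lra).
  assert (Hx : Rabs x <= Fb * d) by (apply HF; lra).
  assert (Hy : Rabs y <= Fb * d) by (apply HF; lra).
  assert (Hxy : Rabs (x - y) <= Rabs x + Rabs y).
  { unfold Rminus. eapply Rle_trans. apply Rabs_triang. rewrite Rabs_Ropp. lra. }
  replace (2 * D * Fb * d) with (D * (2 * (Fb * d))) by ring.
  apply Rmult_le_compat_l. unfold D; lra. lra.
Qed.
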